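(* Let $\langle U_\alpha\rangle_{\alpha<\omega}$ be a smooth splitting sequence for a disjunctive program $P$. Then $P$ is consistent if and only if $bot_{U_\alpha}(P)$ is consistent for every $\alpha<\omega$.
   Context: A disjunctive program is a set of rules $A_1\vee\dots\vee A_m\leftarrow L_1,\dots,L_n$ ($m>0$, $n\ge0$), $A_j$ atoms, $L_i$ atoms or negated atoms $\mathtt{not}\,A$, possibly with function symbols; $head(r)=\{A_1,\dots,A_m\}$. $\mathsf{Ground}(P)$ is its ground instantiation, $\mathit{atom}(r)$ the set of atoms of a ground rule $r$, $\mathit{atom}(\mathsf{Ground}(P))$ the set of ground atoms occurring in $\mathsf{Ground}(P)$. For a set $M$ of ground atoms and a set $Q$ of ground rules, $Q^M$ is obtained from $Q$ by deleting rules having some $\mathtt{not}\,B$ in the body with $B\in M$ and deleting negative literals from the remaining rules; $M$ is a stable model of $Q$ iff it is a minimal Herbrand model of $Q^M$ (for $P$ take $Q=\mathsf{Ground}(P)$). A program is consistent iff it has a stable model. A splitting set of $P$ is a set $U$ of ground atoms such that for all $r\in\mathsf{Ground}(P)$, $head(r)\cap U\neq\emptyset$ implies $\mathit{atom}(r)\subseteq U$; $bot_U(P)=\{r\in\mathsf{Ground}(P)\mid head(r)\cap U\ne\emptyset\}$. A splitting sequence $\langle U_\alpha\rangle_{\alpha<\mu}$ for $P$ is a sequence of splitting sets of $P$ that is monotone, continuous (at limit ordinals it is the union of the previous sets) and has union $\mathit{atom}(\mathsf{Ground}(P))$. It is smooth iff $U_0$ is finite and $U_{\alpha+1}\setminus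 U_\alpha$ is finite for all $\alpha+1<\mu$. *)

(* Defs.v *)
From Stdlib Require Import List.
Import ListNotations.
Set Implicit Arguments.

Section Programs.
Variables (Fsym : Type) (ar : Fsym -> nat) (Psym : Type).

Inductive term : Type :=
| Var : nat -> term
| Fn : Fsym -> list term -> term.

Inductive gterm : Type :=
| GFn : Fsym -> list gterm -> gterm.

(* well-formed ground terms = elements of the Herbrand universe *)
Fixpoint gwf (t : gterm) : Prop :=
  match t with
  | GFn f l => length l = ar f /\ fold_right (fun u acc => gwf u /\ acc) True l
  end.

Fixpoint tvars (t : term) : list nat :=
  match t with
  | Var v => [v]
  | Fn _ l => flat_map tvars l
  end.

Fixpoint tsubst (s : nat -> gterm) (t : term) : gterm :=
  match t with
  | Var v => s v
  | Fn f l => GFn f (map (tsubst s) l)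
  end.

Record atom := mkAtom { apred : Psym; aargs : list term }.
Record gatom := mkGAtom { gpred : Psym; gargs : list gterm }.

Inductive lit (A : Type) : Type :=
| Pos : A -> lit A
| Neg : A -> lit A.
Arguments Pos {A}. Arguments Neg {A}.

(* rule  A_1 v ... v A_m <- L_1, ..., L_n   (m > 0) *)
Record rule := mkRule { rhead : list atom; rbody : list (lit atom); rhead_ne : rhead <> [] }.
Record grule := mkGRule { ghead : list gatom; gbody : list (lit gatom) }.

Definition program := rule -> Prop.
Definition gprogram := grule -> Prop.
Definition gset := gatom -> Prop.

Definition lit_atom {A} (l : lit A) : A := match l with Pos a => a | Neg a => a end.
Definition lit_map {A B} (f : A -> B) (l : lit A) : lit B :=
  match l with Pos a => Pos (f a) | Neg a => Neg (f a) end.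

Definition avars (a : atom) : list nat := flat_map tvars (aargs a).
Definition rvars (r : rule) : list nat :=
  flat_map avars (rhead r) ++ flat_map (fun l => avars (lit_atom l)) (rbody r).

Definition asubst (s : nat -> gterm) (a : atom) : gatom :=
  mkGAtom (apred a) (map (tsubst s) (aargs a)).

Definition rsubst (s : nat -> gterm) (r : rule) : grule :=
  mkGRule (map (asubst s) (rhead r)) (map (lit_map (asubst s)) (rbody r)).

Definition Ground (P : program) : gprogram :=
  fun g => exists r s, P r /\ (forall v, In v (rvars r) -> gwf (s v)) /\ g = rsubst s r.

Definition head_of (r : grule) : gset := fun a => In a (ghead r).
Definition atom_of_rule (r : grule) : gset :=
  fun a => In a (ghead r) \/ exists l, In l (gbody r) /\ lit_atom l = a.
Definition atoms (Q : gprogram) : gset := fun a => exists r, Q r /\ atom_of_rule r a.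

Definition reduct (Q : gprogram) (M : gset) : gprogram :=
  fun r' => exists r, Q r /\ (forall B, In (Neg B) (gbody r) -> ~ M B) /\
    r' = mkGRule (ghead r) (filter (fun l => match l with Pos _ => true | Neg _ => false end) (gbody r)).

Definition lit_true (M : gset) (l : lit gatom) : Prop :=
  match l with Pos a => M a | Neg a => ~ M a end.

Definition is_model (Q : gprogram) (M : gset) : Prop :=
  forall r, Q r -> (forall l, In l (gbody r) -> lit_true M l) -> exists a, In a (ghead r) /\ M a.

Definition subset (A B : gset) : Prop := forall a, A a -> B a.

Definition minimal_model (Q : gprogram) (M : gset) : Prop :=
  is_model Q M /\ forall N, subset N M -> is_model Q N -> subset M N.

Definition stable_model (Q : gprogram) (M : gset) : Prop := minimal_model (reduct Q M) M.

Definition consistent_ground (Q : gprogram) : Prop := exists M, stable_model Q M.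
Definition consistent (P : program) : Prop := consistent_ground (Ground P).

Definition splitting_set (P : program) (U : gset) : Prop :=
  forall r, Ground P r -> (exists a, head_of r a /\ U a) -> subset (atom_of_rule r) U.

Definition bot (U : gset) (P : program) : gprogram :=
  fun r => Ground P r /\ exists a, head_of r a /\ U a.

(* splitting sequence of length omega: <U_n>_{n < omega}.  Continuity is
   vacuous since there are no limit ordinals below omega. *)
Definition splitting_sequence_omega (P : program) (U : nat -> gset) : Prop :=
  (forall n, splitting_set P (U n)) /\
  (forall m n, m <= n -> subset (U m) (U n)) /\
  (forall a, (exists n, U n a) <-> atoms (Ground P) a).

Definition finite_set (S : gset) : Prop := exists l, forall a, S a -> In a l.

Definition smooth_omega (U : nat -> gset) : Prop :=
  finite_set (U 0) /\ forall n, finite_set (fun a => U (S n) a /\ ~ U n a).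

End Programs.

Arguments Pos {A}. Arguments Neg {A}.

(* Main.v *)
Require Import Defs.
From Stdlib Require Import List Lia Classical ClassicalEpsilon FunctionalExtensionality PropExtensionality.
Import ListNotations.

Lemma gset_ext (F Ps : Type) (A B : gset F Ps) : (forall a, A a <-> B a) -> A = B.
Proof.
  intros H. apply functional_extensionality. intros a.
  apply propositional_extensionality. apply H.
Qed.

Lemma body_mono (F Ps : Type) (r : grule F Ps) (M N : gset F Ps) :
  (forall b, In (Pos b) (gbody r) -> M b -> N b) ->
  (forall l, In l (filter (fun l => match l with Pos _ => true | Neg _ => false end) (gbody r)) -> lit_true M l) ->
  forall l, In l (filter (fun l => match l with Pos _ => true | Neg _ => false end) (gbody r)) -> lit_true N l.
Proof.
  intros H H1 l Hl. pose proof (H1 l Hl) as H2.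
  apply filter_In in Hl as [Hin Hp]. destruct l; simpl in *; [eauto|discriminate].
Qed.

Lemma restr_stable (F Ps : Type) (Q Bt : gprogram F Ps) (U M : gset F Ps) :
  (forall r, Q r -> (exists a, head_of r a /\ U a) -> subset (atom_of_rule r) U) ->
  (forall r, Bt r <-> Q r /\ exists a, head_of r a /\ U a) ->
  stable_model Q M -> stable_model Bt (fun a => M a /\ U a).
Proof.
  unfold stable_model, minimal_model. intros hs hB [Hm Hmin]. split.
  - intros r' [r [Hr [Hneg ->]]] Hbody.
    apply hB in Hr as [HQ Hh]. pose proof (hs r HQ Hh) as Hsub.
    destruct (Hm (mkGRule (ghead r) (filter (fun l => match l with Pos _ => true | Neg _ => false end) (gbody r)))) as [a [Ha HMa]].
    + exists r; split; [exact HQ| split; [|reflexivity]].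
      intros B HB HMB. apply (Hneg B HB). split; [exact HMB|].
      apply Hsub. right. exists (Neg B); auto.
    + apply body_mono with (M := fun a => M a /\ U a); [|exact Hbody].
      intros b _ [h _]; exact h.
    + exists a; split; [exact Ha|]. split; [exact HMa|]. apply Hsub; left; exact Ha.
  - intros N HNsub HN.
    set (N' := fun a => N a \/ (M a /\ ~ U a)).
    assert (HN'm : is_model (reduct Q M) N').
    { intros r' [r [Hr [Hneg ->]]] Hbody.
      destruct (classic (exists a, head_of r a /\ U a)) as [Hh|Hh].
      + pose proof (hs r Hr Hh) as Hsub.
        destruct (HN (mkGRule (ghead r) (filter (fun l => match l with Pos _ => true | Neg _ => false end) (gbody r)))) as [a [Ha HNa]].
        * exists r; split; [apply hB; auto | split; [|reflexivity]].
          intros B HB [HMB _]; exact (Hneg B HB HMB).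
        * apply body_mono with (M := N'); [|exact Hbody].
          intros b Hb [h|[_ h]]; [exact h|]. exfalso; apply h, Hsub. right. exists (Pos b); auto.
        * exists a; split; [exact Ha| left; exact HNa].
      + destruct (Hm (mkGRule (ghead r) (filter (fun l => match l with Pos _ => true | Neg _ => false end) (gbody r)))) as [a [Ha HMa]].
        * exists r; auto.
        * apply body_mono with (M := N'); [|exact Hbody].
          intros b Hb [h|[h _]]; [apply HNsub in h; destruct h; auto|exact h].
        * exists a; split; [exact Ha|]. right. split; [exact HMa|].
          intro HU. apply Hh. exists a; split; auto. }
    assert (HN'sub : subset N' M).
    { intros a [h|[h _]]; [apply HNsub in h; destruct h; auto| auto]. }
    pose proof (Hmin N' HN'sub HN'm) as Hsub'.
    intros a [HMa HUa]. destruct (Hsub' a HMa) as [h|[_ h]]; [exact h| contradiction].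
Qed.

Lemma stable_sub (F Ps : Type) (Bt : gprogram F Ps) (U M : gset F Ps) :
  (forall r, Bt r -> forall a, head_of r a -> U a) -> stable_model Bt M -> subset M U.
Proof.
  intros hd [Hm Hmin].
  assert (Hs : subset M (fun a => M a /\ U a)).
  { apply Hmin; [intros a [h _]; exact h|].
    intros r' Hr' Hbody. pose proof Hr' as [r [Hr [Hneg ->]]].
    destruct (Hm _ Hr') as [a [Ha HMa]].
    - apply body_mono with (M := fun a => M a /\ U a); [|exact Hbody].
      intros b _ [h _]; exact h.
    - exists a; split; [exact Ha|]. split; [exact HMa|]. apply (hd r Hr a Ha). }
  intros a h. apply (Hs a h).
Qed.

Lemma pigeon (X : Type) (C : list X) : forall (Q : nat -> Prop) (f : nat -> X),
  (forall k, exists m, k <= m /\ Q m) -> (forall m, Q m -> In (f m) C) ->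
  exists c, In c C /\ forall k, exists m, k <= m /\ Q m /\ f m = c.
Proof.
  induction C as [|c C IH]; intros Q f H H'.
  - destruct (H 0) as [m [_ Hq]]. destruct (H' m Hq).
  - destruct (classic (forall k, exists m, k <= m /\ Q m /\ f m = c)) as [h|h].
    + exists c; split; [left; reflexivity|exact h].
    + apply not_all_ex_not in h as [N hN].
      destruct (IH (fun m => Q m /\ N <= m) f) as [c' [Hc' Hinf]].
      * intros k. destruct (H (max k N)) as [m [Hm Hq]]. exists m; repeat split; auto; lia.
      * intros m [Hq Hn]. destruct (H' m Hq) as [e|i]; [|exact i].
        exfalso; apply hN; exists m; auto.
      * exists c'; split; [right; exact Hc'|].
        intros k; destruct (Hinf k) as [m [? [[? ?] ?]]]; eauto.
Qed.

Fixpoint pw {A : Type} (l : list A) : list (A -> Prop) :=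
  match l with
  | [] => [fun _ => False]
  | a :: l => pw l ++ map (fun S x => x = a \/ S x) (pw l)
  end.

Lemma pw_spec (A : Type) (l : list A) : forall (S : A -> Prop),
  (forall x, S x -> In x l) -> exists T, In T (pw l) /\ forall x, S x <-> T x.
Proof.
  induction l as [|a l IH]; intros S HS.
  - exists (fun _ => False). split; [left; reflexivity|].
    intros x; split; [intros h; destruct (HS x h)|intros []].
  - destruct (IH (fun x => S x /\ x <> a)) as [T [HT HST]].
    { intros x [hx hne]. destruct (HS x hx) as [e|i]; [congruence|exact i]. }
    destruct (classic (S a)) as [Ha|Ha].
    + exists (fun x => x = a \/ T x). split.
      * simpl. apply in_or_app; right. apply in_map_iff. exists T; auto.
      * intros x; split.
        -- intros hx. destruct (classic (x = a)); [left; auto | right; apply HST; auto].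
        -- intros [->|hT]; [auto| apply HST in hT; tauto].
    + exists T; split; [simpl; apply in_or_app; left; auto|].
      intros x; split.
      * intros hx; apply HST; split; auto; intros ->; contradiction.
      * intros hT; apply HST in hT; tauto.
Qed.

Lemma fin_U (F Ps : Type) (U : nat -> gset F Ps) : smooth_omega U -> forall n, finite_set (U n).
Proof.
  intros [H0 HS] n. induction n as [|n [l Hl]]; [exact H0|].
  destruct (HS n) as [d Hd]. exists (l ++ d). intros a Ha. apply in_or_app.
  destruct (classic (U n a)); [left; auto| right; apply Hd; auto].
Qed.

Theorem corollary4p2 (Fsym : Type) (ar : Fsym -> nat) (Psym : Type)
  (P : program Fsym Psym) (U : nat -> gset Fsym Psym) :
  splitting_sequence_omega ar P U -> smooth_omega U ->
  (consistent ar P <-> forall n, consistent_ground (bot ar (U n) P)).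
Proof.
  intros [Hsplit [Hmono Hcover]] Hsmooth. split.
  - intros [M HM] n. exists (fun a => M a /\ U n a).
    apply restr_stable with (Q := Ground ar P); [| |exact HM].
    + intros r Hr Hh. exact (Hsplit n r Hr Hh).
    + intros r; unfold bot; tauto.
  - intros H.
    assert (restr_bot : forall n m, n <= m -> forall M, stable_model (bot ar (U m) P) M ->
               stable_model (bot ar (U n) P) (fun a => M a /\ U n a)).
    { intros n m Hnm M HM. apply restr_stable with (Q := bot ar (U m) P); [| |exact HM].
      - intros r [Hr _] Hh; exact (Hsplit n r Hr Hh).
      - intros r; unfold bot; split.
        + intros [Hr Hh]. split; [split; [exact Hr|] | exact Hh].
          destruct Hh as [a [h u]]; exists a; split; [exact h| apply (Hmono n m); auto].
        + intros [[Hr _] Hh]; auto. }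
    assert (sub_U : forall n M, stable_model (bot ar (U n) P) M -> subset M (U n)).
    { intros n M HM. apply stable_sub with (Bt := bot ar (U n) P); [|exact HM].
      intros r [Hr Hh] a Ha. apply (Hsplit n r Hr Hh). left; exact Ha. }
    set (Mf := fun m => proj1_sig (constructive_indefinite_description _ (H m))).
    assert (HMf : forall m, stable_model (bot ar (U m) P) (Mf m)).
    { intros m. exact (proj2_sig (constructive_indefinite_description _ (H m))). }
    set (good := fun n (X : gset Fsym Psym) => forall k, exists m, k <= m /\ (fun a => Mf m a /\ U n a) = X).
    assert (good_stable : forall n X, good n X -> stable_model (bot ar (U n) P) X).
    { intros n X g. destruct (g n) as [m [Hnm <-]]. apply (restr_bot n m Hnm); auto. }
    assert (pw_in : forall n m, exists L, In (fun a => Mf m a /\ U n a) (pw L)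
                     /\ forall m', In (fun a => Mf m' a /\ U n a) (pw L)).
    { intros n m. destruct (fin_U _ _ U Hsmooth n) as [L HL]. exists L.
      assert (Hall : forall m', In (fun a => Mf m' a /\ U n a) (pw L)).
      { intros m'. destruct (pw_spec _ L (fun a => Mf m' a /\ U n a)) as [T [HT HE]].
        - intros x [_ hx]; apply HL; exact hx.
        - replace (fun a => Mf m' a /\ U n a) with T; [exact HT|].
          apply gset_ext; intros a; symmetry; apply HE. }
      split; auto. }
    assert (good_step : forall n X, good n X -> exists Y, good (S n) Y /\ forall a, Y a /\ U n a <-> X a).
    { intros n X g. destruct (pw_in (S n) 0) as [L [_ HL]].
      destruct (pigeon _ (pw L) (fun m => (fun a => Mf m a /\ U n a) = X) (fun m => fun a => Mf m a /\ U (S n) a))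
        as [c [_ Hinf]].
      - intros k; destruct (g k) as [m [? ?]]; eauto.
      - intros m _; apply HL.
      - exists c. split.
        + intros k; destruct (Hinf k) as [m [hk [hq hf]]]; exists m; split; auto.
        + destruct (Hinf 0) as [m [_ [hq hf]]]. rewrite <- hq, <- hf. intros a; split.
          * intros [[h1 h2] h3]; auto.
          * intros [h1 h3]; split; [split; auto; apply (Hmono n (S n)); auto| auto]. }
    assert (good0 : exists X, good 0 X).
    { destruct (pw_in 0 0) as [L [_ HL]].
      destruct (pigeon _ (pw L) (fun _ => True) (fun m => fun a => Mf m a /\ U 0 a)) as [c [_ Hinf]].
      - intros k; exists k; auto.
      - intros m _; apply HL.
      - exists c. intros k; destruct (Hinf k) as [m [hk [_ hf]]]; eauto. }
    assert (step : forall n (X : {X | good n X}), {Y | good (S n) Y /\ forall a, Y a /\ U n a <-> proj1_sig X a}).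
    { intros n [X gX]. apply constructive_indefinite_description. apply good_step; auto. }
    pose (base := constructive_indefinite_description _ good0).
    pose (sq := fix sq n : {X | good n X} := match n return {X | good n X} with
                | 0 => base
                | S n' => let y := step n' (sq n') in exist _ (proj1_sig y) (proj1 (proj2_sig y)) end).
    set (Sq := fun n => proj1_sig (sq n)).
    assert (gsq : forall n, good n (Sq n)) by (intros n; exact (proj2_sig (sq n))).
    assert (chain1 : forall n a, Sq (S n) a /\ U n a <-> Sq n a).
    { intros n. exact (proj2 (proj2_sig (step n (sq n)))). }
    assert (chain : forall n k, n <= k -> forall a, Sq n a <-> Sq k a /\ U n a).
    { intros n k Hle. induction Hle as [|m Hle IH]; intros a.
      - split; [intros h; split; auto; apply (sub_U n _ (good_stable n _ (gsq n))); auto | tauto].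
      - rewrite (IH a), <- (chain1 m a). split.
        + intros [[h1 h2] h3]; auto.
        + intros [h1 h3]; split; [split; auto; apply (Hmono n m); auto| auto]. }
    set (Minf := fun a => exists n, Sq n a).
    assert (restrict : forall n a, Minf a /\ U n a <-> Sq n a).
    { intros n a; split.
      - intros [[k hk] hu]. destruct (Compare_dec.le_ge_dec k n) as [l|l].
        + apply (chain k n l a) in hk. tauto.
        + apply (chain n k l a). auto.
      - intros h; split; [exists n; auto| apply (sub_U n _ (good_stable n _ (gsq n))); auto]. }
    assert (cover : forall r, Ground ar P r -> exists n, bot ar (U n) P r).
    { intros r Hr. pose proof Hr as [r0 [s [HP [_ Er]]]].
      destruct (rhead r0) as [|a0 t] eqn:E; [exfalso; exact (rhead_ne r0 E)|].
      assert (Ha : In (asubst s a0) (ghead r)) by (rewrite Er; simpl; rewrite E; left; reflexivity).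
      destruct (proj2 (Hcover (asubst s a0))) as [n hn].
      - exists r; split; [exact Hr| left; exact Ha].
      - exists n; split; [exact Hr|]. exists (asubst s a0); split; auto. }
    exists Minf. split.
    + intros r' [r [Hr [Hneg ->]]] Hbody. destruct (cover r Hr) as [n Hb].
      pose proof (Hsplit n r Hr (proj2 Hb)) as Hsub.
      destruct (good_stable n _ (gsq n)) as [Hm _].
      destruct (Hm (mkGRule (ghead r) (filter (fun l => match l with Pos _ => true | Neg _ => false end) (gbody r)))) as [a [Ha Hsa]].
      * exists r; split; [exact Hb| split; [|reflexivity]].
        intros B HB HsB. apply (Hneg B HB). exists n; exact HsB.
      * apply body_mono with (M := Minf); [|exact Hbody].
        intros b Hb' hm. apply restrict. split; auto. apply Hsub. right. exists (Pos b); auto.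
      * exists a; split; auto. exists n; auto.
    + intros N HNsub HN a [n Ha].
      set (Nn := fun a => N a /\ U n a).
      destruct (good_stable n _ (gsq n)) as [_ Hmin].
      assert (Hsub1 : subset Nn (Sq n)).
      { intros b [hN hU]. apply restrict; split; auto. }
      assert (Hmod : is_model (reduct (bot ar (U n) P) (Sq n)) Nn).
      { intros r' [r [Hr [Hneg ->]]] Hbody. destruct Hr as [HrG Hh].
        pose proof (Hsplit n r HrG Hh) as Hsub.
        destruct (HN (mkGRule (ghead r) (filter (fun l => match l with Pos _ => true | Neg _ => false end) (gbody r)))) as [b [Hb HNb]].
        - exists r; split; [exact HrG| split; [|reflexivity]].
          intros B HB HMB. apply (Hneg B HB). apply restrict. split; auto.
          apply Hsub; right; exists (Neg B); auto.
        - apply body_mono with (M := Nn); [|exact Hbody]. intros c _ [h _]; exact h.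
        - exists b; split; auto; split; auto. apply Hsub; left; exact Hb. }
      exact (proj1 (Hmin Nn Hsub1 Hmod a Ha)).
Qed.
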